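(* Let $I\subseteq\mathbb{R}$ be an open interval (possibly unbounded) and $\Sigma=I\times\mathbb{R}$. (i) If $F\in C^1(\Sigma,\mathbb{R}^2)$ is a non-singular map of the form $F(x,y)=\big(p_0(x),\,q_1(x)y+q_0(x)\big)$ with $p_0,q_0,q_1\in C^1(I,\mathbb{R})$, then $F$ is injective (hence invertible onto its image), and $q_1(x)\neq0$ for all $x\in I$. (ii) If $F(x,y)=\big(p_1(x)y+p_0(x),\,Q(x,y)\big)\in C^1(\Sigma,\mathbb{R}^2)$ is non-singular and $p_1(x)\neq0$ for all $x\in I$, then $F$ is injective. (iii) If $F(x,y)=\big(p_1(x)y+p_0(x),\,Q(x,y)\big)\in C^2(\Sigma,\mathbb{R}^2)$ is non-singular, then $p_1$ has no simple zeroes, i.e. there is no $x_0\in I$ with $p_1(x_0)=0\neq p_1'(x_0)$.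
   Context: For $F=(P,Q)$, $d_F=P_xQ_y-P_yQ_x$ is the Jacobian determinant; $F$ is non-singular if $d_F(x,y)\neq0$ for all $(x,y)\in\Sigma$. *)

(* Defs.v *)
From Stdlib Require Import Reals.
From Coquelicot Require Import Coquelicot.
Open Scope R_scope.

Definition in_interval (a b : Rbar) (x : R) : Prop := Rbar_lt a x /\ Rbar_lt x b.

Definition in_Sigma (a b : Rbar) (x y : R) : Prop := in_interval a b x.

Definition pdx (f : R -> R -> R) : R -> R -> R := fun x y => Derive (fun t => f t y) x.
Definition pdy (f : R -> R -> R) : R -> R -> R := fun x y => Derive (fun t => f x t) y.

Definition C1_Sigma (a b : Rbar) (f : R -> R -> R) : Prop :=
  forall x y, in_Sigma a b x y ->
    ex_derive (fun t => f t y) x /\ ex_derive (fun t => f x t) y /\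
    continuity_2d_pt f x y /\
    continuity_2d_pt (pdx f) x y /\ continuity_2d_pt (pdy f) x y.

Definition C2_Sigma (a b : Rbar) (f : R -> R -> R) : Prop :=
  C1_Sigma a b f /\ C1_Sigma a b (pdx f) /\ C1_Sigma a b (pdy f).

Definition C1_I (a b : Rbar) (g : R -> R) : Prop :=
  forall x, in_interval a b x -> ex_derive g x /\ continuity_pt (Derive g) x.

Definition jac (P Q : R -> R -> R) (x y : R) : R :=
  pdx P x y * pdy Q x y - pdy P x y * pdx Q x y.

Definition nonsingular (a b : Rbar) (P Q : R -> R -> R) : Prop :=
  forall x y, in_Sigma a b x y -> jac P Q x y <> 0.

Definition injective_Sigma (a b : Rbar) (P Q : R -> R -> R) : Prop :=
  forall x1 y1 x2 y2, in_Sigma a b x1 y1 -> in_Sigma a b x2 y2 ->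
    P x1 y1 = P x2 y2 -> Q x1 y1 = Q x2 y2 -> x1 = x2 /\ y1 = y2.

(* Main.v *)
Require Import Defs.
From Stdlib Require Import Reals Lra.
From Coquelicot Require Import Coquelicot.
Open Scope R_scope.

Lemma deriv_loc f y l : is_derive f y l -> forall e : posreal,
  exists d : posreal, forall v, Rabs (v - y) < d -> Rabs (f v - f y - l * (v - y)) <= e * Rabs (v - y).
Proof.
intros [_ H] e. specialize (H y (fun P HP => HP) e). simpl in H.
destruct H as [d Hd]. exists d. intros v Hv.
specialize (Hd v Hv). revert Hd.
unfold norm, minus, plus, opp, scal; simpl. unfold abs, mult, plus, opp; simpl.
unfold Rminus. rewrite (Rmult_comm l). auto.
Qed.

Lemma interval_open a b x : in_interval a b x ->
  exists d : posreal, forall t, Rabs (t - x) < d -> in_interval a b t.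
Proof.
intros [Ha Hb].
set (da := match a with Finite ra => x - ra | _ => 1 end).
set (db := match b with Finite rb => rb - x | _ => 1 end).
assert (Hda : 0 < da) by (unfold da; destruct a; simpl in *; lra).
assert (Hdb : 0 < db) by (unfold db; destruct b; simpl in *; lra).
assert (Hd : 0 < Rmin da db) by (apply Rmin_pos; lra).
exists (mkposreal _ Hd). simpl. intros t Ht.
pose proof (Rmin_l da db). pose proof (Rmin_r da db).
apply Rabs_def2 in Ht. destruct Ht.
split.
- unfold da in *; destruct a; simpl in *; lra.
- unfold db in *; destruct b; simpl in *; lra.
Qed.

Lemma interval_seg a b x1 x2 c : in_interval a b x1 -> in_interval a b x2 ->
  Rmin x1 x2 <= c <= Rmax x1 x2 -> in_interval a b c.
Proof.
intros [H1 H2] [H3 H4] [H5 H6].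
assert (Rmin x1 x2 = x1 \/ Rmin x1 x2 = x2) by (unfold Rmin; destruct Rle_dec; auto).
assert (Rmax x1 x2 = x1 \/ Rmax x1 x2 = x2) by (unfold Rmax; destruct Rle_dec; auto).
split.
- destruct a; simpl in *; auto; destruct H; lra.
- destruct b; simpl in *; auto; destruct H0; lra.
Qed.

Lemma C1_diff f x y :
  locally_2d (fun u v => ex_derive (fun t => f t v) u) x y ->
  continuity_2d_pt (pdx f) x y -> ex_derive (fun t => f x t) y ->
  differentiable_pt_lim f x y (pdx f x y) (pdy f x y).
Proof.
intros [d1 H1] Hc Hy eps.
assert (He2 : 0 < eps / 2) by (destruct eps; simpl; lra).
set (e2 := mkposreal _ He2).
destruct (Hc e2) as [d2 H2].
assert (Hy' : is_derive (fun t => f x t) y (pdy f x y)).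
{ unfold pdy. apply Derive_correct. exact Hy. }
destruct (deriv_loc _ _ _ Hy' e2) as [d3 H3].
assert (Hd : 0 < Rmin d1 (Rmin d2 d3)).
{ destruct d1, d2, d3; simpl. repeat apply Rmin_pos; auto. }
exists (mkposreal _ Hd). simpl. intros u v Hu Hv.
pose proof (Rmin_l d1 (Rmin d2 d3)). pose proof (Rmin_r d1 (Rmin d2 d3)).
pose proof (Rmin_l d2 d3). pose proof (Rmin_r d2 d3).
destruct (MVT_gen (fun t => f t v) x u (fun t => pdx f t v)) as [c [Hc1 Hc2]].
- intros t Ht. unfold pdx. apply Derive_correct. apply H1.
  + assert (Rmin x u = x \/ Rmin x u = u) by (unfold Rmin; destruct Rle_dec; auto).
    assert (Rmax x u = x \/ Rmax x u = u) by (unfold Rmax; destruct Rle_dec; auto).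
    apply Rabs_def1; apply Rabs_def2 in Hu; destruct Hu, Ht; destruct H5, H6; lra.
  + lra.
- intros t Ht. apply continuity_pt_filterlim. apply (@ex_derive_continuous R_AbsRing R_NormedModule (fun t => f t v)). apply H1.
  + assert (Rmin x u = x \/ Rmin x u = u) by (unfold Rmin; destruct Rle_dec; auto).
    assert (Rmax x u = x \/ Rmax x u = u) by (unfold Rmax; destruct Rle_dec; auto).
    apply Rabs_def1; apply Rabs_def2 in Hu; destruct Hu, Ht; destruct H5, H6; lra.
  + lra.
- simpl in Hc2.
  assert (Hcx : Rabs (c - x) < Rmin d1 (Rmin d2 d3)).
  { assert (Rmin x u = x \/ Rmin x u = u) by (unfold Rmin; destruct Rle_dec; auto).
    assert (Rmax x u = x \/ Rmax x u = u) by (unfold Rmax; destruct Rle_dec; auto).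
    apply Rabs_def1; apply Rabs_def2 in Hu; destruct Hu, Hc1; destruct H5, H6; lra. }
  assert (Hp := H2 c v ltac:(lra) ltac:(lra)). simpl in Hp.
  assert (Hq := H3 v ltac:(lra)). simpl in Hq.
  replace (f u v - f x y - (pdx f x y * (u - x) + pdy f x y * (v - y)))
    with ((pdx f c v - pdx f x y) * (u - x) + (f x v - f x y - pdy f x y * (v - y))) by lra.
  eapply Rle_trans. apply Rabs_triang. rewrite Rabs_mult.
  assert (Rabs (u - x) <= Rmax (Rabs (u - x)) (Rabs (v - y))) by apply Rmax_l.
  assert (Rabs (v - y) <= Rmax (Rabs (u - x)) (Rabs (v - y))) by apply Rmax_r.
  assert (0 <= Rabs (u - x)) by apply Rabs_pos.
  assert (Rabs (pdx f c v - pdx f x y) * Rabs (u - x) <= eps / 2 * Rabs (u - x)).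
  { apply Rmult_le_compat_r; lra. }
  destruct eps; simpl in *. nra.
Qed.
Lemma deriv_lin c d y : Derive (fun t => c * t + d) y = c.
Proof. apply is_derive_unique. auto_derive; auto; ring. Qed.

Lemma P_derivs (p0 p1 : R -> R) x : (forall y, ex_derive (fun t => p1 t * y + p0 t) x) ->
  ex_derive p0 x /\ ex_derive p1 x.
Proof.
intros H.
assert (H0 : ex_derive p0 x).
{ eapply ex_derive_ext; [|apply (H 0)]. intros t; simpl; ring. }
split; auto.
eapply ex_derive_ext; [|apply (ex_derive_minus _ _ x (H 1) H0)]. intros t; simpl; unfold minus, plus, opp; simpl; ring.
Qed.

Lemma P_dx (p0 p1 : R -> R) x y : ex_derive p0 x -> ex_derive p1 x ->
  Derive (fun t => p1 t * y + p0 t) x = Derive p1 x * y + Derive p0 x.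
Proof. intros H0 H1. apply is_derive_unique. auto_derive. split; auto. rewrite !Rmult_1_l; reflexivity. Qed.

Lemma part1 (a b : Rbar) :
  (forall p0 q0 q1 : R -> R,
     C1_I a b p0 -> C1_I a b q0 -> C1_I a b q1 ->
     let P := fun x y : R => p0 x in
     let Q := fun x y : R => q1 x * y + q0 x in
     C1_Sigma a b P -> C1_Sigma a b Q ->
     nonsingular a b P Q ->
     injective_Sigma a b P Q /\ (forall x, in_interval a b x -> q1 x <> 0)).
Proof.
intros p0 q0 q1 Hp0 Hq0 Hq1 P Q HP HQ Hns.
assert (Hj : forall x, in_interval a b x -> Derive p0 x * q1 x <> 0).
{ intros x Hx. specialize (Hns x 0 Hx). unfold jac, pdx, pdy, P, Q in Hns.
  rewrite deriv_lin, Derive_const in Hns. intros E; apply Hns. rewrite Rmult_0_l, Rminus_0_r. exact E. }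
split.
- intros x1 y1 x2 y2 H1 H2 E1 E2. unfold P, Q in E1, E2.
  assert (x1 = x2).
  { destruct (Req_dec x1 x2) as [|Hne]; auto. exfalso.
    destruct (MVT_gen p0 x1 x2 (Derive p0)) as [c [Hc1 Hc2]].
    + intros t Ht. apply Derive_correct. apply Hp0.
      apply (interval_seg a b x1 x2); auto; lra.
    + intros t Ht. apply continuity_pt_filterlim.
      apply (@ex_derive_continuous R_AbsRing R_NormedModule p0). apply Hp0.
      apply (interval_seg a b x1 x2); auto.
    + assert (Hc : in_interval a b c) by (apply (interval_seg a b x1 x2); auto).
      specialize (Hj c Hc). rewrite E1 in Hc2.
      assert (Derive p0 c = 0).
      { apply (Rmult_eq_reg_r (x2 - x1)). lra. intro; apply Hne; lra. }
      apply Hj. rewrite H. ring. }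
  subst x2. split; auto.
  apply (Rmult_eq_reg_l (q1 x1)). lra.
  intros E; apply (Hj x1 H1). rewrite E; ring.
- intros x Hx E. apply (Hj x Hx). rewrite E; ring.
Qed.

Lemma part3 (a b : Rbar) :
  (forall (p0 p1 : R -> R) (Q : R -> R -> R),
     let P := fun x y : R => p1 x * y + p0 x in
     C2_Sigma a b P -> C2_Sigma a b Q ->
     nonsingular a b P Q ->
     ~ (exists x0, in_interval a b x0 /\ p1 x0 = 0 /\ Derive p1 x0 <> 0)).
Proof.
intros p0 p1 Q P [HP _] _ Hns [x0 [Hx [E Hd]]].
destruct (P_derivs p0 p1 x0) as [D0 D1].
{ intros y. apply (HP x0 y Hx). }
set (y := - Derive p0 x0 / Derive p1 x0).
apply (Hns x0 y Hx). unfold jac, pdx, pdy, P.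
rewrite deriv_lin, P_dx by auto. rewrite E. unfold y. field. auto.
Qed.

Lemma part2 (a b : Rbar) :
  (forall (p0 p1 : R -> R) (Q : R -> R -> R),
     let P := fun x y : R => p1 x * y + p0 x in
     C1_Sigma a b P -> C1_Sigma a b Q ->
     nonsingular a b P Q ->
     (forall x, in_interval a b x -> p1 x <> 0) ->
     injective_Sigma a b P Q).
Proof.
intros p0 p1 Q P HP HQ Hns Hp1 x1 y1 x2 y2 H1 H2 E1 E2.
assert (Hd : forall x, in_interval a b x -> ex_derive p0 x /\ ex_derive p1 x).
{ intros x Hx. apply P_derivs. intros y. apply (HP x y Hx). }
destruct (Req_dec x1 x2) as [Heq|Hne].
{ subst x2. split; auto. unfold P in E1.
  apply (Rmult_eq_reg_l (p1 x1)). lra. apply Hp1; auto. }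
exfalso.
set (u := P x1 y1).
set (yf := fun t => (u - p0 t) / p1 t).
set (g := fun t => Q t (yf t)).
set (D := fun t => pdx Q t (yf t) * 1 + pdy Q t (yf t) * Derive yf t).
assert (Hyf : forall t, in_interval a b t -> ex_derive yf t).
{ intros t Ht. destruct (Hd t Ht). specialize (Hp1 t Ht). unfold yf.
  auto_derive. auto. }
assert (Hg : forall t, in_interval a b t -> is_derive g t (D t)).
{ intros t Ht. apply is_derive_Reals. unfold g, D.
  apply (derivable_pt_lim_comp_2d Q (fun t => t) yf t).
  - destruct (interval_open a b t Ht) as [d Hdd].
    apply C1_diff.
    + exists d. intros u' v' Hu' _. apply (HQ u' v' (Hdd u' Hu')).
    + apply (HQ t (yf t) Ht).
    + apply (HQ t (yf t) Ht).
  - apply derivable_pt_lim_id.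
  - apply is_derive_Reals. apply Derive_correct. auto. }
destruct (MVT_gen g x1 x2 D) as [c [Hc1 Hc2]].
- intros t Ht. apply Hg. apply (interval_seg a b x1 x2); auto; lra.
- intros t Ht. apply continuity_pt_filterlim.
  apply (@ex_derive_continuous R_AbsRing R_NormedModule g).
  eexists. apply Hg. apply (interval_seg a b x1 x2); auto.
- assert (Hc : in_interval a b c) by (apply (interval_seg a b x1 x2); auto).
  assert (Y1 : yf x1 = y1).
  { unfold yf, u, P. field. apply Hp1; auto. }
  assert (Y2 : yf x2 = y2).
  { unfold yf, u. rewrite E1. unfold P. field. apply Hp1; auto. }
  assert (G : g x2 - g x1 = 0).
  { unfold g. rewrite Y1, Y2. lra. }
  assert (DZ : D c = 0).
  { rewrite G in Hc2. apply (Rmult_eq_reg_r (x2 - x1)). lra. intro; apply Hne; lra. }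
  destruct (Hd c Hc) as [D0 D1].
  specialize (Hp1 c Hc).
  assert (Hyd : Derive yf c = ((- Derive p0 c) * p1 c - (u - p0 c) * Derive p1 c) / (p1 c)^2).
  { apply is_derive_unique. unfold yf. auto_derive. auto. change (Derive (fun x => p0 x) c) with (Derive p0 c). change (Derive (fun x => p1 x) c) with (Derive p1 c). field. auto. }
  apply (Hns c (yf c) Hc). unfold jac.
  unfold D in DZ. rewrite Hyd in DZ.
  unfold pdx at 1, pdy at 2, P. rewrite deriv_lin, P_dx by auto.
  unfold yf. unfold yf in DZ.
  set (A := pdx Q c ((u - p0 c) / p1 c)) in *.
  set (B := pdy Q c ((u - p0 c) / p1 c)) in *.
  replace (Derive p1 c * ((u - p0 c) / p1 c) + Derive p0 c)
    with (- (p1 c * ((- Derive p0 c) * p1 c - (u - p0 c) * Derive p1 c) / (p1 c)^2)) by (field; auto).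
  replace (p1 c * A) with (p1 c * (A * 1)) by ring.
  replace (A * 1) with (- (B * (((- Derive p0 c) * p1 c - (u - p0 c) * Derive p1 c) / (p1 c)^2))) by lra.
  field. auto.
Qed.
Theorem lemma3 (a b : Rbar) (Hab : Rbar_lt a b) :
  (* (i) *)
  (forall p0 q0 q1 : R -> R,
     C1_I a b p0 -> C1_I a b q0 -> C1_I a b q1 ->
     let P := fun x y : R => p0 x in
     let Q := fun x y : R => q1 x * y + q0 x in
     C1_Sigma a b P -> C1_Sigma a b Q ->
     nonsingular a b P Q ->
     injective_Sigma a b P Q /\ (forall x, in_interval a b x -> q1 x <> 0)) /\
  (* (ii) *)
  (forall (p0 p1 : R -> R) (Q : R -> R -> R),
     let P := fun x y : R => p1 x * y + p0 x in
     C1_Sigma a b P -> C1_Sigma a b Q ->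
     nonsingular a b P Q ->
     (forall x, in_interval a b x -> p1 x <> 0) ->
     injective_Sigma a b P Q) /\
  (* (iii) *)
  (forall (p0 p1 : R -> R) (Q : R -> R -> R),
     let P := fun x y : R => p1 x * y + p0 x in
     C2_Sigma a b P -> C2_Sigma a b Q ->
     nonsingular a b P Q ->
     ~ (exists x0, in_interval a b x0 /\ p1 x0 = 0 /\ Derive p1 x0 <> 0)).
Proof.
split; [apply part1|split; [apply part2|apply part3]].
Qed.
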